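(* For any state $\eta$ of $R$, any state $\tau$ of $A$ and any $p\in[0,1]$, with $\Lambda_p(\eta):=p\eta+(1-p)\mathbb{1}/d$ and $d=d_R$, $$\Phi_{\Lambda_p(\eta)}(\tau)=p\,\Phi_\eta(\tau)+(1-p)\,\Phi_{\mathbb{1}/d}(\tau)=p\,\Phi_\eta(\tau)+\frac{1-p}{d}.$$
   Context: $G$ is a compact group with normalized Haar measure $dg$; finite-dimensional systems $A,R$ carry continuous unitary representations $U_A,U_R$. On $RA$, $\mathcal{G}(M)=\int dg\,(U_R(g)\otimes U_A(g))M(U_R(g)\otimes U_A(g))^\dagger$. $\Phi_\eta(\tau):=\inf_{X\ge0}\{\mathrm{tr}[X]:\mathbb{1}_R\otimes X-\mathcal{G}(\eta\otimes\tau)\ge0\}$. *)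

(* Defs.v *)
From HB Require Import structures.
From mathcomp Require Import all_boot all_order all_algebra.
From mathcomp Require Import all_classical all_reals all_analysis.
From mathcomp.real_closed Require Import complex mxtens.

Set Implicit Arguments.
Unset Strict Implicit.
Unset Printing Implicit Defensive.

Import Order.TTheory GRing.Theory Num.Theory.
Import numFieldTopology.Exports numFieldNormedType.Exports.
Local Open Scope classical_set_scope.
Local Open Scope ring_scope.

Notation borelG G := (g_sigma_algebraType (@open G)).

Section QDefs.
Variable R : realType.
Local Notation C := R[i].

Definition adjmx {m n : nat} (A : 'M[C]_(m, n)) : 'M[C]_(n, m) :=
  (map_mx (@conjc R) A)^T.

(* positive semidefinite: Hermitian with nonnegative quadratic form
   (0 <= z in the order of R[i] means z is a nonnegative real) *)
Definition psdmx {n : nat} (A : 'M[C]_n) : Prop :=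
  A = adjmx A /\ forall v : 'cV[C]_n, 0 <= (adjmx v *m A *m v) 0 0.

Definition is_state {n : nat} (rho : 'M[C]_n) : Prop :=
  psdmx rho /\ \tr rho = 1.

Definition is_compact_group (G : ptopologicalType)
  (mul : G -> G -> G) (inv : G -> G) (e : G) : Prop :=
  [/\ (forall x y z, mul x (mul y z) = mul (mul x y) z),
      (forall x, mul e x = x /\ mul x e = x),
      (forall x, mul (inv x) x = e /\ mul x (inv x) = e) &
      [/\ continuous (fun gh : G * G => mul gh.1 gh.2),
           continuous inv,
           hausdorff_space G &
           compact [set: G]]].


Definition is_normalized_haar (G : ptopologicalType) (mul : G -> G -> G)
  (mu : {measure set (borelG G) -> \bar R}) : Prop :=
  [/\ mu [set: borelG G] = 1%E,
      (forall (g : G) (A : set (borelG G)), measurable A ->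
          mu [set mul g x | x in A] = mu A),
      (forall A : set (borelG G), measurable A ->
          mu A = ereal_inf [set mu U | U in [set U : set G | open U /\ A `<=` U]]) &
      (forall U : set G, open U ->
          mu U = ereal_sup [set mu K | K in [set K : set G | compact K /\ K `<=` U]])].

Definition is_unitary_rep (G : ptopologicalType) (mul : G -> G -> G) (e : G)
  (n : nat) (U : G -> 'M[C]_n) : Prop :=
  [/\ (forall g h, U (mul g h) = U g *m U h),
      U e = 1%:M,
      (forall g, U g *m adjmx (U g) = 1%:M) &
      (forall i j, continuous (fun g => complex.Re (U g i j)) /\
                   continuous (fun g => complex.Im (U g i j)))].

Definition mx_integral (G : ptopologicalType)
  (mu : {measure set (borelG G) -> \bar R}) {m n : nat}
  (F : borelG G -> 'M[C]_(m, n)) : 'M[C]_(m, n) :=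
  \matrix_(i, j) Complex (Rintegral mu [set: borelG G] (fun g => complex.Re (F g i j)))
                         (Rintegral mu [set: borelG G] (fun g => complex.Im (F g i j))).

Definition twirl (G : ptopologicalType) (mu : {measure set (borelG G) -> \bar R})
  {dR dA : nat} (UR : G -> 'M[C]_dR) (UA : G -> 'M[C]_dA)
  (M : 'M[C]_(dR * dA)) : 'M[C]_(dR * dA) :=
  mx_integral mu (fun g : borelG G =>
    (UR g *t UA g) *m M *m adjmx (UR g *t UA g)).

Definition Phi (G : ptopologicalType) (mu : {measure set (borelG G) -> \bar R})
  {dR dA : nat} (UR : G -> 'M[C]_dR) (UA : G -> 'M[C]_dA)
  (eta : 'M[C]_dR) (tau : 'M[C]_dA) : R :=
  inf [set complex.Re (\tr X) | X in [set X : 'M[C]_dA |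
         psdmx X /\ psdmx ((1%:M : 'M[C]_dR) *t X - twirl mu UR UA (eta *t tau))]].

End QDefs.

(* Main.v *)
Require Import Defs.
From HB Require Import structures.
From mathcomp Require Import all_boot all_order all_algebra.
From mathcomp Require Import all_classical all_reals all_analysis.
From mathcomp.real_closed Require Import complex mxtens.
From mathcomp Require Import lra.
Import Order.TTheory GRing.Theory Num.Theory.
Import numFieldTopology.Exports numFieldNormedType.Exports.
Local Open Scope classical_set_scope.
Local Open Scope ring_scope.
Local Open Scope complex_scope.

Section Main.

Variables (R : realType) (G : ptopologicalType).
Variable mu : {measure set (borelG G) -> \bar R}.
Hypothesis cG : compact [set: G].
Hypothesis mu1 : mu [set: borelG G] = 1%E.

Lemma cont_measurable (f : G -> R) : continuous f ->
  measurable_fun [set: borelG G] (f : borelG G -> R).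
Proof.
move=> /continuousP cf.
apply: (measurability _ (measurable_realfun.RGenOpens.measurableE R)).
move=> _ [_ [a [b ->] <-]]; rewrite setTI.
apply: sub_sigma_algebra; exact/cf/interval_open.
Qed.

Lemma cont_integrable (f : G -> R) : continuous f ->
  mu.-integrable [set: borelG G] (EFin \o (f : borelG G -> R)).
Proof.
move=> cf; apply: measurable_bounded_integrable => //.
- by rewrite mu1 ltry.
- exact: cont_measurable.
- have := @continuous_compact G R^o f [set: G].
  move=> H; have /compact_bounded : compact [set f x | x in [set: G]].
    by apply: H => //; apply: continuous_subspaceT.
  move=> B; move: B; rewrite /bounded_set /bounded_near /=.
  by apply: filterS => M HM x _; apply: HM; exists x.
Qed.

Definition cc (f : G -> R[i]) :=
  continuous (fun g => complex.Re (f g)) /\ continuous (fun g => complex.Im (f g)).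

Definition CI (f : G -> R[i]) : R[i] :=
  Complex (Rintegral mu [set: borelG G] (fun g => complex.Re (f g)))
          (Rintegral mu [set: borelG G] (fun g => complex.Im (f g))).

Lemma ReM (x y : R[i]) : complex.Re (x * y) = complex.Re x * complex.Re y - complex.Im x * complex.Im y.
Proof. by case: x => a b; case: y => c d. Qed.
Lemma ImM (x y : R[i]) : complex.Im (x * y) = complex.Re x * complex.Im y + complex.Im x * complex.Re y.
Proof. by case: x => a b; case: y => c d. Qed.
Lemma ReD (x y : R[i]) : complex.Re (x + y) = complex.Re x + complex.Re y.
Proof. by case: x => a b; case: y => c d. Qed.
Lemma ImD (x y : R[i]) : complex.Im (x + y) = complex.Im x + complex.Im y.
Proof. by case: x => a b; case: y => c d. Qed.
Lemma ReN (x : R[i]) : complex.Re (- x) = - complex.Re x.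
Proof. by case: x => a b. Qed.
Lemma ImN (x : R[i]) : complex.Im (- x) = - complex.Im x.
Proof. by case: x => a b. Qed.
Lemma ReJ (x : R[i]) : complex.Re (conjc x) = complex.Re x.
Proof. by case: x => a b. Qed.
Lemma ImJ (x : R[i]) : complex.Im (conjc x) = - complex.Im x.
Proof. by case: x => a b. Qed.

Lemma cc_cst c : cc (fun=> c).
Proof. by split; apply: cst_continuous. Qed.

Lemma cc_add f h : cc f -> cc h -> cc (fun g => f g + h g).
Proof.
move=> [f1 f2] [h1 h2]; split => x.
  have -> : (fun g => complex.Re (f g + h g)) = (fun g => complex.Re (f g) + complex.Re (h g)).
    by apply/funext => g; rewrite ReD.
  exact: (continuousD (f1 x) (h1 x)).
have -> : (fun g => complex.Im (f g + h g)) = (fun g => complex.Im (f g) + complex.Im (h g)).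
  by apply/funext => g; rewrite ImD.
exact: (continuousD (f2 x) (h2 x)).
Qed.

Lemma cc_opp f : cc f -> cc (fun g => - f g).
Proof.
move=> [f1 f2]; split => x.
  have -> : (fun g => complex.Re (- f g)) = (fun g => - complex.Re (f g)).
    by apply/funext => g; rewrite ReN.
  exact: (continuousN (f1 x)).
have -> : (fun g => complex.Im (- f g)) = (fun g => - complex.Im (f g)).
  by apply/funext => g; rewrite ImN.
exact: (continuousN (f2 x)).
Qed.

Lemma cc_mul f h : cc f -> cc h -> cc (fun g => f g * h g).
Proof.
move=> [f1 f2] [h1 h2]; split => x.
  have -> : (fun g => complex.Re (f g * h g)) = (fun g => complex.Re (f g) * complex.Re (h g) + - (complex.Im (f g) * complex.Im (h g))).
    by apply/funext => g; rewrite ReM.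
  exact: (continuousD (continuousM (f1 x) (h1 x)) (continuousN (continuousM (f2 x) (h2 x)))).
have -> : (fun g => complex.Im (f g * h g)) = (fun g => complex.Re (f g) * complex.Im (h g) + complex.Im (f g) * complex.Re (h g)).
  by apply/funext => g; rewrite ImM.
exact: (continuousD (continuousM (f1 x) (h2 x)) (continuousM (f2 x) (h1 x))).
Qed.

Lemma cc_conj f : cc f -> cc (fun g => conjc (f g)).
Proof.
move=> [f1 f2]; split => x.
  have -> : (fun g => complex.Re (conjc (f g))) = (fun g => complex.Re (f g)).
    by apply/funext => g; rewrite ReJ.
  exact: f1.
have -> : (fun g => complex.Im (conjc (f g))) = (fun g => - complex.Im (f g)).
  by apply/funext => g; rewrite ImJ.
exact: (continuousN (f2 x)).
Qed.

Lemma cc_sum (I : eqType) (r : seq I) (P : pred I) (F : I -> G -> R[i]) :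
  (forall i, cc (F i)) -> cc (fun g => \sum_(i <- r | P i) F i g).
Proof.
move=> HF; elim: r => [|a r IH].
  by under eq_fun do rewrite big_nil; apply: cc_cst.
under eq_fun do rewrite big_cons.
case: (P a) => //; exact: cc_add.
Qed.

Lemma CI_ext f h : (forall g, f g = h g) -> CI f = CI h.
Proof. by move=> e; rewrite /CI; congr Complex; apply: eq_Rintegral => g _; rewrite e. Qed.

Let mT : measurable [set: borelG G]. Proof. exact: measurableT. Qed.

Lemma CI_add f h : cc f -> cc h -> CI (fun g => f g + h g) = CI f + CI h.
Proof.
move=> [f1 f2] [h1 h2]; rewrite /CI.
under eq_Rintegral do rewrite ReD.
under [X in Complex _ X]eq_Rintegral do rewrite ImD.
by rewrite !RintegralD //; apply: cont_integrable.
Qed.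

Lemma Rint_cst0 : Rintegral mu [set: borelG G] (fun=> 0 : R) = 0.
Proof. by rewrite Rintegral_cst // mul0r. Qed.

Lemma CI_cst c : CI (fun=> c) = c.
Proof.
rewrite /CI !Rintegral_cst // mu1 /= !mulr1.
by case: c.
Qed.

Lemma contZ (k : R) (f : G -> R) : continuous f -> continuous (fun g => k * f g).
Proof. by move=> cf x; exact: (continuousM (@cst_continuous _ _ k x) (cf x)). Qed.

Lemma CI_mull c f : cc f -> CI (fun g => c * f g) = c * CI f.
Proof.
move=> [f1 f2]; rewrite /CI.
under eq_Rintegral do rewrite ReM.
under [X in Complex _ X]eq_Rintegral do rewrite ImM.
rewrite RintegralB ?RintegralD ?RintegralZl //;
  try (apply: cont_integrable => //; apply: contZ => //).
by case: c.
Qed.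

Lemma CI_mulr c f : cc f -> CI (fun g => f g * c) = CI f * c.
Proof.
move=> cf; rewrite mulrC -CI_mull //; apply: CI_ext => g; exact: mulrC.
Qed.

Lemma CI_conj f : cc f -> CI (fun g => conjc (f g)) = conjc (CI f).
Proof.
move=> [f1 f2]; rewrite /CI.
under eq_Rintegral do rewrite ReJ.
under [X in Complex _ X]eq_Rintegral do rewrite ImJ.
have -> : Rintegral mu [set: borelG G] (fun g => - complex.Im (f g)) =
          Rintegral mu [set: borelG G] (fun g => (-1) * complex.Im (f g)).
  by apply: eq_Rintegral => g _; rewrite mulN1r.
rewrite RintegralZl //; last exact: cont_integrable.
by rewrite mulN1r.
Qed.

Lemma CI_sum (I : eqType) (r : seq I) (P : pred I) (F : I -> G -> R[i]) :
  (forall i, cc (F i)) ->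
  CI (fun g => \sum_(i <- r | P i) F i g) = \sum_(i <- r | P i) CI (F i).
Proof.
move=> HF; elim: r => [|a r IH].
  rewrite big_nil (@CI_ext _ (fun=> 0)) ?CI_cst // => g; by rewrite big_nil.
rewrite big_cons -IH; case Pa: (P a).
  rewrite -CI_add //; try exact: cc_sum.
  by apply: CI_ext => g; rewrite big_cons Pa.
by apply: CI_ext => g; rewrite big_cons Pa.
Qed.

Lemma CI_ge0 f : cc f -> (forall g, 0 <= f g) -> 0 <= CI f.
Proof.
move=> [f1 f2] H; rewrite /CI.
have -> : Rintegral mu [set: borelG G] (fun g => complex.Im (f g)) = 0.
  rewrite -(Rint_cst0); apply: eq_Rintegral => g _.
  by have := H g; rewrite lecE /= => /andP[/eqP -> _].
rewrite lecE /= eqxx /=; apply: Rintegral_ge0 => g _.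
by have := H g; rewrite lecE /= => /andP[_ ->].
Qed.

Local Notation C := R[i].


Lemma adjmxE m n (A : 'M[C]_(m, n)) i j : adjmx A i j = conjc (A j i).
Proof. by rewrite !mxE. Qed.

Lemma adjmxK m n (A : 'M[C]_(m, n)) : adjmx (adjmx A) = A.
Proof. by apply/matrixP => i j; rewrite !adjmxE conjcK. Qed.

Lemma adjmxD m n (A B : 'M[C]_(m, n)) : adjmx (A + B) = adjmx A + adjmx B.
Proof. by apply/matrixP => i j; rewrite !mxE rmorphD. Qed.

Lemma adjmxN m n (A : 'M[C]_(m, n)) : adjmx (- A) = - adjmx A.
Proof. by apply/matrixP => i j; rewrite !mxE rmorphN. Qed.

Lemma adjmxB m n (A B : 'M[C]_(m, n)) : adjmx (A - B) = adjmx A - adjmx B.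
Proof. by rewrite adjmxD adjmxN. Qed.

Lemma adjmxZ m n (c : C) (A : 'M[C]_(m, n)) : adjmx (c *: A) = conjc c *: adjmx A.
Proof. by apply/matrixP => i j; rewrite !mxE rmorphM. Qed.

Lemma adjmxM m n p (A : 'M[C]_(m, n)) (B : 'M[C]_(n, p)) :
  adjmx (A *m B) = adjmx B *m adjmx A.
Proof.
apply/matrixP => i j; rewrite !mxE rmorph_sum; apply: eq_bigr => k _.
by rewrite !mxE rmorphM mulrC.
Qed.

Lemma adjmx1 n : adjmx (1%:M : 'M[C]_n) = 1%:M.
Proof.
by apply/matrixP => i j; rewrite !mxE conjc_nat eq_sym.
Qed.

Lemma adjmx0 m n : adjmx (0 : 'M[C]_(m, n)) = 0.
Proof. by apply/matrixP => i j; rewrite !mxE conjc0. Qed.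

Lemma adjmx_tens m n p q (A : 'M[C]_(m, n)) (B : 'M[C]_(p, q)) :
  adjmx (A *t B) = adjmx A *t adjmx B.
Proof. by apply/matrixP => i j; rewrite !mxE rmorphM. Qed.

Lemma tensmxDr m n p q (A : 'M[C]_(m, n)) (B D : 'M[C]_(p, q)) :
  A *t (B + D) = A *t B + A *t D.
Proof. by apply/matrixP => i j; rewrite !mxE mulrDr. Qed.

Lemma tensmxDl m n p q (A D : 'M[C]_(m, n)) (B : 'M[C]_(p, q)) :
  (A + D) *t B = A *t B + D *t B.
Proof. by apply/matrixP => i j; rewrite !mxE mulrDl. Qed.

Lemma tensmxZr m n p q (c : C) (A : 'M[C]_(m, n)) (B : 'M[C]_(p, q)) :
  A *t (c *: B) = c *: (A *t B).
Proof. by apply/matrixP => i j; rewrite !mxE mulrCA. Qed.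

Lemma tensmxZl m n p q (c : C) (A : 'M[C]_(m, n)) (B : 'M[C]_(p, q)) :
  (c *: A) *t B = c *: (A *t B).
Proof. by apply/matrixP => i j; rewrite !mxE mulrA. Qed.

Lemma tensmxNr m n p q (A : 'M[C]_(m, n)) (B : 'M[C]_(p, q)) :
  A *t (- B) = - (A *t B).
Proof. by apply/matrixP => i j; rewrite !mxE mulrN. Qed.

Lemma tensmxBr m n p q (A : 'M[C]_(m, n)) (B D : 'M[C]_(p, q)) :
  A *t (B - D) = A *t B - A *t D.
Proof. by rewrite tensmxDr tensmxNr. Qed.

Lemma tens11 m n : (1%:M : 'M[C]_m) *t (1%:M : 'M[C]_n) = 1%:M.
Proof.
apply/matrixP => i j.
case: (mxtens_indexP i) => i1 i2; case: (mxtens_indexP j) => j1 j2.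
rewrite tensmxE !mxE -natrM mulnb; congr (_%:R); congr nat_of_bool.
apply/idP/idP.
  by case/andP => /eqP -> /eqP ->.
move/eqP/(can_inj (@mxtens_indexK _ _)) => [-> ->]; by rewrite !eqxx.
Qed.

Lemma qformE n (v : 'cV[C]_n) (A : 'M[C]_n) :
  (adjmx v *m A *m v) 0 0 = \sum_i \sum_j conjc (v i 0) * A i j * v j 0.
Proof.
rewrite mxE; under eq_bigr do rewrite mxE big_distrl /=.
rewrite exchange_big; apply: eq_bigr => i _; apply: eq_bigr => j _.
by rewrite adjmxE.
Qed.


Lemma conjR (r : R) : conjc (r%:C) = r%:C :> C.
Proof. by rewrite /conjc /= oppr0. Qed.

Lemma psdD n (A B : 'M[C]_n) : psdmx A -> psdmx B -> psdmx (A + B).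
Proof.
move=> [hA qA] [hB qB]; split; first by rewrite adjmxD -hA -hB.
move=> v; rewrite mulmxDr mulmxDl mxE; exact: addr_ge0.
Qed.

Lemma psdZ n (r : R) (A : 'M[C]_n) : 0 <= r -> psdmx A -> psdmx (r%:C *: A).
Proof.
move=> r0 [hA qA]; split; first by rewrite adjmxZ conjR -hA.
move=> v; rewrite -scalemxAr -scalemxAl mxE; apply: mulr_ge0 => //.
by rewrite ler0c.
Qed.

Lemma psd1 n : psdmx (1%:M : 'M[C]_n).
Proof.
split; first by rewrite adjmx1.
move=> v; rewrite mulmx1 mxE; apply: sumr_ge0 => i _.
by rewrite adjmxE mulrC -sqr_normc exprn_ge0.
Qed.

Lemma adj_delta m n (i : 'I_m) (j : 'I_n) : adjmx (delta_mx i j : 'M[C]_(m, n)) = delta_mx j i.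
Proof.
apply/matrixP => a b; rewrite adjmxE !mxE conjc_nat.
by rewrite andbC.
Qed.

Lemma psd_diag n (A : 'M[C]_n) i : psdmx A -> 0 <= A i i.
Proof.
move=> [_ qA]; have := qA (delta_mx i 0).
by rewrite adj_delta -rowE -colE !mxE.
Qed.

Lemma psd_tr n (A : 'M[C]_n) : psdmx A -> 0 <= complex.Re (\tr A).
Proof.
move=> pA; have : 0 <= \tr A by apply: sumr_ge0 => i _; exact: psd_diag.
by rewrite lecE => /andP[_].
Qed.

Lemma psd_tens1 m n (Y : 'M[C]_n) : (0 < m)%N ->
  psdmx ((1%:M : 'M[C]_m) *t Y) -> psdmx Y.
Proof.
move=> m0 [h q]; pose i0 := Ordinal m0; split.
  apply/matrixP => a b.
  have := congr1 (fun M : 'M[C]_(m * n) => M (mxtens_index (i0, a)) (mxtens_index (i0, b))) h.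
  rewrite /= adjmx_tens adjmx1 !tensmxE !mxE eqxx !mul1r => ->.
  by [].
move=> v; pose d : 'cV[C]_m := delta_mx i0 0.
have E : (adjmx (d *t v) *m (1%:M *t Y) *m (d *t v)) (0 : 'I_(1*1)) (0 : 'I_(1*1))
    = (adjmx v *m Y *m v) 0 0.
  rewrite adjmx_tens /d adj_delta !tensmx_mul mulmx1 mul_delta_mx.
  have -> : (0 : 'I_(1 * 1)) = mxtens_index (0, 0) by apply: val_inj.
  rewrite tensmxE !mxE; have -> : mxtens_index ((0 : 'I_1), (0 : 'I_1)) = 0 :> 'I_(1 * 1) by apply: val_inj.
  by rewrite eqxx mul1r.
rewrite -E; exact: (q (d *t v)).
Qed.


Definition ccM m n (F : G -> 'M[C]_(m, n)) := forall i j, cc (fun g => F g i j).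
Arguments ccM {m n}.

Lemma ccM_cst m n (M : 'M[C]_(m, n)) : ccM (fun=> M).
Proof. by move=> i j; apply: cc_cst. Qed.

Lemma cc_ext f h : (forall g, f g = h g) -> cc f -> cc h.
Proof. by move=> e; have -> : f = h by apply/funext. Qed.

Lemma ccM_add m n (F H : G -> 'M[C]_(m, n)) : ccM F -> ccM H -> ccM (fun g => F g + H g).
Proof.
move=> cF cH i j; apply: (@cc_ext (fun g => F g i j + H g i j)); first by move=> g; rewrite mxE.
exact: cc_add.
Qed.

Lemma ccM_scale m n c (F : G -> 'M[C]_(m, n)) : ccM F -> ccM (fun g => c *: F g).
Proof.
move=> cF i j; apply: (@cc_ext (fun g => c * F g i j)); first by move=> g; rewrite mxE.
exact: cc_mul (cc_cst _) (cF i j).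
Qed.

Lemma ccM_mul m n p (F : G -> 'M[C]_(m, n)) (H : G -> 'M[C]_(n, p)) :
  ccM F -> ccM H -> ccM (fun g => F g *m H g).
Proof.
move=> cF cH i j; apply: (@cc_ext (fun g => \sum_k F g i k * H g k j)); first by move=> g; rewrite mxE.
by apply: cc_sum => k; apply: cc_mul.
Qed.

Lemma ccM_adj m n (F : G -> 'M[C]_(m, n)) : ccM F -> ccM (fun g => adjmx (F g)).
Proof.
move=> cF i j; apply: (@cc_ext (fun g => conjc (F g j i))); first by move=> g; rewrite adjmxE.
exact: cc_conj.
Qed.

Lemma ccM_tens m n p q (F : G -> 'M[C]_(m, n)) (H : G -> 'M[C]_(p, q)) :
  ccM F -> ccM H -> ccM (fun g => F g *t H g).
Proof.
move=> cF cH i j; apply: (@cc_ext (fun g => F g (mxtens_unindex i).1 (mxtens_unindex j).1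
                 * H g (mxtens_unindex i).2 (mxtens_unindex j).2)); first by move=> g; rewrite mxE.
exact: cc_mul.
Qed.

Definition mxI m n (F : G -> 'M[C]_(m, n)) : 'M[C]_(m, n) := mx_integral mu F.
Arguments mxI {m n}.

Lemma mxIE m n (F : G -> 'M[C]_(m, n)) i j : mxI F i j = CI (fun g => F g i j).
Proof. by rewrite mxE. Qed.

Lemma mxI_add m n (F H : G -> 'M[C]_(m, n)) : ccM F -> ccM H ->
  mxI (fun g => F g + H g) = mxI F + mxI H.
Proof.
move=> cF cH; apply/matrixP => i j; rewrite [LHS]mxIE [RHS]mxE !mxIE -CI_add //.
by apply: CI_ext => g; rewrite mxE.
Qed.

Lemma mxI_scale m n c (F : G -> 'M[C]_(m, n)) : ccM F ->
  mxI (fun g => c *: F g) = c *: mxI F.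
Proof.
move=> cF; apply/matrixP => i j; rewrite [LHS]mxIE [RHS]mxE !mxIE -CI_mull //.
by apply: CI_ext => g; rewrite mxE.
Qed.

Lemma mxI_tensl m n p q (A : 'M[C]_(m, n)) (F : G -> 'M[C]_(p, q)) : ccM F ->
  mxI (fun g => A *t F g) = A *t mxI F.
Proof.
move=> cF; apply/matrixP => i j; rewrite [LHS]mxIE [RHS]mxE !mxIE -CI_mull //.
by apply: CI_ext => g; rewrite mxE.
Qed.

Lemma mxI_adj m n (F : G -> 'M[C]_(m, n)) : ccM F ->
  mxI (fun g => adjmx (F g)) = adjmx (mxI F).
Proof.
move=> cF; apply/matrixP => i j; rewrite [LHS]mxIE [RHS]adjmxE !mxIE -CI_conj //.
by apply: CI_ext => g; rewrite adjmxE.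
Qed.

Lemma mxI_tr n (F : G -> 'M[C]_n) : ccM F -> \tr (mxI F) = CI (fun g => \tr (F g)).
Proof.
move=> cF; rewrite /mxtrace CI_sum //; apply: eq_bigr => i _; exact: mxIE.
Qed.

Lemma mxI_psd n (F : G -> 'M[C]_n) : ccM F -> (forall g, psdmx (F g)) -> psdmx (mxI F).
Proof.
move=> cF pF; split.
  rewrite -mxI_adj //; congr mxI; apply/funext => g; by case: (pF g).
move=> v; rewrite qformE.
have -> : \sum_i \sum_j conjc (v i 0) * mxI F i j * v j 0 =
   CI (fun g => \sum_i \sum_j conjc (v i 0) * F g i j * v j 0).
  rewrite CI_sum; last by move=> i; apply: cc_sum => j; apply: cc_mul; [apply: cc_mul|]; [apply: cc_cst|apply: cF|apply: cc_cst].
  apply: eq_bigr => i _; rewrite CI_sum; last by move=> j; apply: cc_mul; [apply: cc_mul|]; [apply: cc_cst|apply: cF|apply: cc_cst].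
  apply: eq_bigr => j _; rewrite CI_mulr; last by apply: cc_mul; [apply: cc_cst|apply: cF].
  by rewrite CI_mull // mxIE.
apply: CI_ge0.
  by apply: cc_sum => i; apply: cc_sum => j; apply: cc_mul; [apply: cc_mul|]; [apply: cc_cst|apply: cF|apply: cc_cst].
by move=> g; rewrite -qformE; case: (pF g) => _; apply.
Qed.

Lemma mulmx_scale_mid m n (A : 'M[C]_(m, n)) (c : C) (M : 'M[C]_n) (B : 'M[C]_(n, m)) :
  A *m (c *: M) *m B = c *: (A *m M *m B).
Proof. by rewrite -scalemxAr -scalemxAl. Qed.

Lemma psd_conj n k (W : 'M[C]_(n, k)) (M : 'M[C]_k) : psdmx M -> psdmx (W *m M *m adjmx W).
Proof.
move=> [hM qM]; split.
  by rewrite !adjmxM adjmxK -hM mulmxA.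
move=> v; have := qM (adjmx W *m v).
by rewrite adjmxM adjmxK !mulmxA.
Qed.

Variables (dR dA : nat) (UR : G -> 'M[C]_dR) (UA : G -> 'M[C]_dA).
Hypothesis ccUR : ccM UR.
Hypothesis ccUA : ccM UA.
Hypothesis uUR : forall g, UR g *m adjmx (UR g) = 1%:M.
Hypothesis uUA : forall g, UA g *m adjmx (UA g) = 1%:M.

Local Notation V := (fun g => UR g *t UA g).

Lemma ccV : ccM V.
Proof. exact: ccM_tens. Qed.

Lemma ccW M : ccM (fun g => V g *m M *m adjmx (V g)).
Proof.
apply: ccM_mul; last exact: ccM_adj ccV.
apply: ccM_mul; [exact: ccV | exact: ccM_cst].
Qed.

Lemma twirlE M : twirl mu UR UA M = mxI (fun g => V g *m M *m adjmx (V g)).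
Proof. by []. Qed.

Lemma twirlD M N : twirl mu UR UA (M + N) = twirl mu UR UA M + twirl mu UR UA N.
Proof.
rewrite !twirlE -mxI_add; try exact: ccW.
by congr mxI; apply/funext => g; rewrite mulmxDr mulmxDl.
Qed.

Lemma twirlZ c M : twirl mu UR UA (c *: M) = c *: twirl mu UR UA M.
Proof.
rewrite !twirlE -mxI_scale; last exact: ccW.
by congr mxI; apply/funext => g; rewrite mulmx_scale_mid.
Qed.

Lemma twirl_psd M : psdmx M -> psdmx (twirl mu UR UA M).
Proof.
move=> pM; rewrite twirlE; apply: mxI_psd; first exact: ccW.
by move=> g; apply: psd_conj.
Qed.

Definition sig (tau : 'M[C]_dA) := mxI (fun g => UA g *m tau *m adjmx (UA g)).

Lemma twirl_1t tau : twirl mu UR UA (1%:M *t tau) = 1%:M *t sig tau.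
Proof.
rewrite twirlE /sig -mxI_tensl; last first.
  apply: ccM_mul; last exact: ccM_adj.
  by apply: ccM_mul => //; apply: ccM_cst.
congr mxI; apply/funext => g.
by rewrite adjmx_tens !tensmx_mul mulmx1 uUR.
Qed.

Lemma sig_psd tau : psdmx tau -> psdmx (sig tau).
Proof.
move=> pt; apply: mxI_psd.
  apply: ccM_mul; last exact: ccM_adj.
  by apply: ccM_mul => //; apply: ccM_cst.
by move=> g; apply: psd_conj.
Qed.

Lemma sig_tr tau : \tr tau = 1 -> \tr (sig tau) = 1.
Proof.
move=> t1; rewrite /sig mxI_tr; last first.
  apply: ccM_mul; last exact: ccM_adj.
  by apply: ccM_mul => //; apply: ccM_cst.
rewrite -[RHS](CI_cst 1); apply: CI_ext => g.
by rewrite mxtrace_mulC mulmxA (mulmx1C (uUA g)) mul1mx.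
Qed.

Lemma adjE m n (A : 'M[C]_(m,n)) : adjmx A = map_mx Num.conj (A^T).
Proof. by apply/matrixP => i j; rewrite !mxE. Qed.

Definition Sset (rho : 'M[C]_(dR * dA)) : set R :=
  [set complex.Re (\tr X) | X in [set X : 'M[C]_dA |
         psdmx X /\ psdmx ((1%:M : 'M[C]_dR) *t X - rho)]].

Definition PhiC rho := inf (Sset rho).

Lemma PhiE (eta : 'M[C]_dR) (tau : 'M[C]_dA) :
  Phi mu UR UA eta tau = PhiC (twirl mu UR UA (eta *t tau)).
Proof. by []. Qed.

Lemma Sset_lb rho : lbound (Sset rho) 0.
Proof. by move=> _ [X [pX _] <-]; apply: psd_tr. Qed.

Lemma Sset_hlb rho : has_lbound (Sset rho).
Proof. by exists 0; apply: Sset_lb. Qed.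

Lemma ReCM (p : R) (z : C) : complex.Re (p%:C * z) = p * complex.Re z.
Proof. by rewrite ReM /= mul0r subr0. Qed.

Lemma Re_trZD (p q : R) (X s : 'M[C]_dA) : \tr s = 1 ->
  complex.Re (\tr (p%:C *: X + q%:C *: s)) = p * complex.Re (\tr X) + q.
Proof.
by move=> ts; rewrite mxtraceD !mxtraceZ ts ReD !ReCM /= mulr1.
Qed.

Section Mix.
Variables (rho1 : 'M[C]_(dR * dA)) (s : 'M[C]_dA) (p q : R).
Hypotheses (dR0 : (0 < dR)%N) (prho : psdmx rho1) (ps : psdmx s) (ts : \tr s = 1)
  (p0 : 0 <= p) (q0 : 0 <= q).
Hypothesis ne1 : exists X, psdmx X /\ psdmx ((1%:M : 'M[C]_dR) *t X - rho1).

Let rho := p%:C *: rho1 + q%:C *: ((1%:M : 'M[C]_dR) *t s).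

Lemma mixA X1 : psdmx X1 /\ psdmx ((1%:M : 'M[C]_dR) *t X1 - rho1) ->
  Sset rho (p * complex.Re (\tr X1) + q).
Proof.
move=> [pX1 f1]; exists (p%:C *: X1 + q%:C *: s); last exact: Re_trZD.
split; first by apply: psdD; apply: psdZ.
have -> : (1%:M : 'M[C]_dR) *t (p%:C *: X1 + q%:C *: s) - rho =
          p%:C *: ((1%:M : 'M[C]_dR) *t X1 - rho1).
  rewrite /rho tensmxDr !tensmxZr scalerBr.
  by rewrite opprD addrACA subrr addr0.
exact: psdZ.
Qed.

Lemma mixB X : psdmx X /\ psdmx ((1%:M : 'M[C]_dR) *t X - rho) ->
  p * PhiC rho1 + q <= complex.Re (\tr X).
Proof.
move=> [pX fX]; pose Y := X - q%:C *: s.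
have eY : (1%:M : 'M[C]_dR) *t X - rho = (1%:M : 'M[C]_dR) *t Y - p%:C *: rho1.
  rewrite /Y /rho tensmxBr tensmxZr opprD addrA.
  by rewrite [_ - _ - p%:C *: rho1]addrAC.
have tY : complex.Re (\tr X) = complex.Re (\tr Y) + q.
  rewrite /Y mxtraceD raddfN /= mxtraceZ ts ReD ReN ReCM /= mulr1.
  by rewrite subrK.
rewrite tY lerD2r.
have [pE|pp] := eqVneq p 0.
  rewrite pE mul0r; apply: psd_tr; apply: (@psd_tens1 dR dA _ dR0).
  by move: fX; rewrite eY pE rmorph0 scale0r subr0.
have p1 : 0 < p by rewrite lt0r pp.
pose X1 := (p^-1)%:C *: Y.
have f1 : psdmx ((1%:M : 'M[C]_dR) *t X1 - rho1).
  have -> : (1%:M : 'M[C]_dR) *t X1 - rho1 =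
      (p^-1)%:C *: ((1%:M : 'M[C]_dR) *t X - rho).
    rewrite eY scalerBr scalerA -rmorphM mulVf // scale1r.
    by rewrite /X1 tensmxZr.
  by apply: psdZ => //; rewrite invr_ge0.
have pX1 : psdmx X1.
  apply: (@psd_tens1 dR dA _ dR0).
  have -> : (1%:M : 'M[C]_dR) *t X1 = ((1%:M : 'M[C]_dR) *t X1 - rho1) + rho1.
    by rewrite subrK.
  exact: psdD.
have : PhiC rho1 <= complex.Re (\tr X1).
  by apply: (ge_inf (Sset_hlb rho1)); exists X1.
rewrite /X1 mxtraceZ ReCM => H.
rewrite -(ler_pM2l p1) mulrA mulfV // mul1r in H.
exact: H.
Qed.

Lemma PhiC_mix : PhiC rho = p * PhiC rho1 + q.
Proof.
have [X1 f1] := ne1.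
have ne : Sset rho !=set0 by exists (p * complex.Re (\tr X1) + q); apply: mixA.
apply/eqP; rewrite eq_le; apply/andP; split; last first.
  by apply: lb_le_inf => // _ [X fX <-]; apply: mixB.
have [pE|pp] := eqVneq p 0.
  have := ge_inf (Sset_hlb rho) (mixA X1 f1).
  by rewrite pE !mul0r !add0r.
have p1 : 0 < p by rewrite lt0r pp.
rewrite -lerBlDr -ler_pdivrMl //.
apply: lb_le_inf; first by exists (complex.Re (\tr X1)), X1.
move=> _ [X fX <-].
rewrite ler_pdivrMl // lerBlDr.
exact: (ge_inf (Sset_hlb rho) (mixA X fX)).
Qed.
End Mix.

Lemma normJ (x : C) : `|conjc x| = `|x|.
Proof. by case: x => a b; rewrite !normc_def /= sqrrN. Qed.

Lemma conj_real (x : C) : conjc x = x -> x \is Num.real.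
Proof.
case: x => a b [Hb]; rewrite complex_real; apply/eqP.
have : b + b = 0 by rewrite -{1}Hb addNr.
by move=> H; lra.
Qed.

Lemma amgm (a b : C) : 0 <= a -> 0 <= b -> a * b <= a ^+ 2 + b ^+ 2.
Proof.
move=> a0 b0; have ea := RRe_real (ger0_real a0); have eb := RRe_real (ger0_real b0).
move: a0 b0; rewrite -ea -eb.
rewrite !ler0c -!rmorphXn -rmorphM -rmorphD lecR => a0 b0; nra.
Qed.

Lemma herm_bound n (M : 'M[C]_n) : M = adjmx M ->
  exists c : R, 0 <= c /\ psdmx (c%:C *: 1%:M - M).
Proof.
move=> hM.
pose k : C := \sum_i \sum_j `|M i j|.
have k0 : 0 <= k by apply: sumr_ge0 => i _; apply: sumr_ge0 => j _.
have kM : forall i j, `|M i j| <= k.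
  move=> i j; apply: (@le_trans _ _ (\sum_j `|M i j|)).
    by rewrite (bigD1 j) //= lerDl; apply: sumr_ge0.
  by rewrite /k [leRHS](bigD1 i) //= lerDl; apply: sumr_ge0 => i' _; apply: sumr_ge0.
exists (complex.Re k *+ (n + n)); split.
  by rewrite mulrn_wge0 //; move: k0; rewrite lecE => /andP[].
split.
  by rewrite adjmxB adjmxZ conjR adjmx1 -hM.
move=> v.
rewrite mulmxBr mulmxBl -scalemxAr -scalemxAl mulmx1.
set A := adjmx v *m v; set B := adjmx v *m M *m v; set c := (_ *+ _)%:C.
have -> : (c *: A - B) 0 0 = c * A 0 0 - B 0 0 by rewrite !mxE.
have ck : c = k *+ (n + n).
  by rewrite /c rmorphMn; congr (_ *+ _); exact: RRe_real (ger0_real k0).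
rewrite /A /B [X in _ * X]mxE qformE subr_ge0 ck.
pose a i := `|v i 0|.
have Ea : \sum_j (adjmx v) 0 j * v j 0 = \sum_j a j ^+ 2.
  by apply: eq_bigr => j _; rewrite adjmxE /a sqr_normc mulrC.
rewrite Ea.
set s := \sum_i _.
have sr : s \is Num.real.
  apply: conj_real.
  by rewrite /s -qformE -adjmxE !adjmxM adjmxK -hM mulmxA.
apply: (le_trans (real_ler_norm sr)).
apply: (le_trans (ler_norm_sum _ _ _)).
apply: (@le_trans _ _ (\sum_i \sum_j k * (a i ^+ 2 + a j ^+ 2))).
  apply: ler_sum => i _; apply: (le_trans (ler_norm_sum _ _ _)).
  apply: ler_sum => j _; rewrite !normrM normJ.
  rewrite -/(a i) -/(a j).
  have ai : 0 <= a i by exact: normr_ge0.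
  have aj : 0 <= a j by exact: normr_ge0.
  apply: (@le_trans _ _ (a i * k * a j)).
    by apply: ler_wpM2r => //; apply: ler_wpM2l => //; exact: kM.
  by rewrite [a i * k]mulrC -mulrA; apply: ler_wpM2l => //; apply: amgm.
rewrite le_eqVlt; apply/orP; left; apply/eqP.
under eq_bigr do rewrite -big_distrr big_split /= sumr_const card_ord.
rewrite -big_distrr big_split /= sumr_const card_ord sumrMnl.
by rewrite mulrnDr mulrDl mulrDr mulrnAl mulrnAr.
Qed.

Lemma sum_tens m n (F : 'I_(m * n) -> C) :
  \sum_I F I = \sum_i \sum_a F (mxtens_index (i, a)).
Proof.
rewrite (reindex (@mxtens_index m n)) /=; last first.
  by exists (@mxtens_unindex m n) => x _; [rewrite mxtens_indexK | rewrite mxtens_unindexK].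
by rewrite pair_big /=; apply: eq_bigr => -[i a] _.
Qed.

Lemma ge0_conj (x : C) : 0 <= x -> conjc x = x.
Proof.
move=> x0; have := ger0_Im x0; case: x {x0} => a b /= ->.
by rewrite /conjc oppr0.
Qed.

Lemma psd_tens_diag m n (B : 'M[C]_m) (E : 'rV[C]_n) :
  psdmx B -> (forall k, 0 <= E 0 k) -> psdmx (B *t diag_mx E).
Proof.
move=> [hB qB] E0; split.
  rewrite adjmx_tens -hB; congr (_ *t _).
  apply/matrixP => a b; rewrite adjmxE !mxE eq_sym.
  case: eqP => [->|_]; first by rewrite !mulr1n ge0_conj ?E0.
  by rewrite !mulr0n conjc0.
move=> v; rewrite qformE sum_tens.
have -> : \sum_i \sum_a \sum_J conjc (v (mxtens_index (i, a)) 0) *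
     (B *t diag_mx E) (mxtens_index (i, a)) J * v J 0 =
   \sum_a E 0 a * \sum_i \sum_j conjc (v (mxtens_index (i, a)) 0) * B i j * v (mxtens_index (j, a)) 0.
  rewrite exchange_big; apply: eq_bigr => a _; rewrite big_distrr; apply: eq_bigr => i _.
  rewrite sum_tens big_distrr; apply: eq_bigr => j _.
  rewrite (bigD1 a) //= big1 ?addr0; last first.
    by move=> b /negPf ab; rewrite tensmxE !mxE eq_sym ab mulr0n !mulr0 mul0r.
  by rewrite tensmxE !mxE eqxx mulr1n; rewrite !mulrA [_ * E 0 a]mulrC -!mulrA; congr (_ * _); rewrite !mulrA.
apply: sumr_ge0 => a _; apply: mulr_ge0 => //.
pose w : 'cV[C]_m := \col_i v (mxtens_index (i, a)) 0.
have := qB w; rewrite qformE.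
by under eq_bigr do under eq_bigr do rewrite !mxE.
Qed.

Lemma spec_psd n (A : 'M[C]_n) : psdmx A ->
  exists W : 'M[C]_n, exists E : 'rV[C]_n,
    A = W *m diag_mx E *m adjmx W /\ forall k, 0 <= E 0 k.
Proof.
move=> pA; have hA := pA.1.
have N : A \is normalmx by apply/normalmxP; rewrite -adjE -hA.
have U := spectral_unitarymx A.
have /orthomx_spectralP eA := N.
rewrite (invmx_unitary U) -adjE in eA.
set P := spectralmx A in eA U; set D := spectral_diag A in eA.
exists (adjmx P), D; split; first by rewrite adjmxK.
have PP : P *m adjmx P = 1%:M by rewrite adjE; apply/unitarymxP.
have eD : diag_mx D = P *m A *m adjmx P.
  by rewrite eA !mulmxA PP mul1mx -mulmxA PP mulmx1.
move=> k; have := psd_diag _ _ k (psd_conj _ _ P _ pA).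
by rewrite -eD mxE eqxx mulr1n.
Qed.

Lemma psd_tens m n (B : 'M[C]_m) (D : 'M[C]_n) : psdmx B -> psdmx D -> psdmx (B *t D).
Proof.
move=> pB pD; have [W [E [eD E0]]] := spec_psd _ _ pD.
have -> : B *t D = (1%:M *t W) *m (B *t diag_mx E) *m adjmx (1%:M *t W).
  by rewrite adjmx_tens adjmx1 !tensmx_mul mul1mx mulmx1 eD.
by apply: psd_conj; apply: psd_tens_diag.
Qed.

Lemma main_sec (eta : 'M[C]_dR) (tau : 'M[C]_dA) (p : R) :
  is_state eta -> is_state tau -> 0 <= p <= 1 ->
  let d : R := dR%:R in
  let maxmix : 'M[C]_dR := (d^-1)%:C *: 1%:M in
  let Lam : 'M[C]_dR := p%:C *: eta + (1 - p)%:C *: maxmix in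
  Phi mu UR UA Lam tau
    = p * Phi mu UR UA eta tau + (1 - p) * Phi mu UR UA maxmix tau
  /\ p * Phi mu UR UA eta tau + (1 - p) * Phi mu UR UA maxmix tau
    = p * Phi mu UR UA eta tau + (1 - p) / d.
Proof.
move=> [pe te] [pt tt] /andP[p0 p1] d maxmix Lam.
have dR0 : (0 < dR)%N.
  rewrite lt0n; apply/eqP => d0; move: eta te {pe Lam}; rewrite d0 => eta.
  by rewrite /mxtrace big_ord0 => /esym/eqP; rewrite oner_eq0.
have ps := sig_psd tau pt; have ts := sig_tr tau tt.
set s := sig tau in ps ts.
set rho1 := twirl mu UR UA (eta *t tau).
have prho : psdmx rho1 by apply: twirl_psd; apply: psd_tens.
have ne1 : exists X, psdmx X /\ psdmx ((1%:M : 'M[C]_dR) *t X - rho1).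
  have [c [c0 pc]] := herm_bound _ _ prho.1.
  exists (c%:C *: 1%:M); split; first by apply: psdZ => //; apply: psd1.
  by rewrite tensmxZr tens11.
have d0 : 0 <= d^-1 by rewrite invr_ge0 ler0n.
have q0 : 0 <= (1 - p) / d by rewrite divr_ge0 ?subr_ge0 ?ler0n.
have twm : twirl mu UR UA (maxmix *t tau) = (0:R)%:C *: rho1 + (d^-1)%:C *: (1%:M *t s).
  by rewrite rmorph0 scale0r add0r /maxmix tensmxZl twirlZ twirl_1t.
have twL : twirl mu UR UA (Lam *t tau) = p%:C *: rho1 + ((1 - p) / d)%:C *: (1%:M *t s).
  rewrite /Lam /maxmix tensmxDl twirlD !tensmxZl !twirlZ twirl_1t.
  by rewrite scalerA -rmorphM.
have PM : Phi mu UR UA maxmix tau = d^-1.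
  rewrite PhiE twm (PhiC_mix _ _ _ _ dR0 prho ps ts (lexx 0) d0 ne1).
  by rewrite mul0r add0r.
have PL : Phi mu UR UA Lam tau = p * Phi mu UR UA eta tau + (1 - p) / d.
  by rewrite PhiE twL (PhiC_mix _ _ _ _ dR0 prho ps ts p0 q0 ne1).
by rewrite PM PL.
Qed.

End Main.


Theorem lemma10 (R : realType) (G : ptopologicalType)
  (mul : G -> G -> G) (inv : G -> G) (e : G)
  (mu : {measure set (borelG G) -> \bar R})
  (dR dA : nat) (UR : G -> 'M[R[i]]_dR) (UA : G -> 'M[R[i]]_dA)
  (eta : 'M[R[i]]_dR) (tau : 'M[R[i]]_dA) (p : R) :
  is_compact_group mul inv e ->
  is_normalized_haar mul mu ->
  is_unitary_rep mul e UR ->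
  is_unitary_rep mul e UA ->
  is_state eta -> is_state tau ->
  0 <= p <= 1 ->
  let d : R := dR%:R in
  let maxmix : 'M[R[i]]_dR := (d^-1)%:C *: 1%:M in
  let Lam : 'M[R[i]]_dR := p%:C *: eta + (1 - p)%:C *: maxmix in
  Phi mu UR UA Lam tau
    = p * Phi mu UR UA eta tau + (1 - p) * Phi mu UR UA maxmix tau
  /\ p * Phi mu UR UA eta tau + (1 - p) * Phi mu UR UA maxmix tau
    = p * Phi mu UR UA eta tau + (1 - p) / d.
Proof.
move=> [_ _ _ [_ _ _ cG]] [mu1 _ _ _] [_ _ uR cR] [_ _ uA cA] se st pp.
exact: (@main_sec R G mu cG mu1 dR dA UR UA cR cA uR uA eta tau p se st pp).
Qed.
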